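(* For every $T>0$, $\lambda>0$ and $\epsilon>0$ there is $M=M(T,\lambda,\epsilon)$ such that $$\liminf_{m\to\infty}\mathbb{P}^{(m)}_\sigma\big(\Lambda(T,M,\lambda)\big)>1-\epsilon.$$
   Context: Fix a real exponent $b>0$ and a sequence $\sigma=(\sigma_p)_{p\in\mathcal P}$ of nonnegative reals indexed by the set $\mathcal P$ of primes with $\sum_p\sigma_p<\infty$. For a prime $p$, $\mathbb{Q}_p$ denotes the $p$-adic numbers with absolute value $|\cdot|_p$ and $\mathbb{Z}_p$ its closed unit ball. Let $G_p\subset\mathbb{Q}_p$ be the set of $p$-adic numbers of the form $\sum_{k<0}a_kp^k$ with $a_k\in\{0,\dots,p-1\}$, only finitely many nonzero; $G_p$ is a set of representatives of $\mathbb{Q}_p/\mathbb{Z}_p$ and is given the group structure of $\mathbb{Q}_p/\mathbb{Z}_p$. Let $X^{(p)}$ be a $G_p$-valued random variable with $\Pr(|X^{(p)}|_p=p^k)=(p^b-1)p^{-kb}$ for every integer $k\ge1$, and, conditionally on $|X^{(p)}|_p=p^k$, uniformly distributed on the finite set $\{x\in G_p:|x|_p=p^k\}$. Let $X^{(p)}_1,X^{(p)}_2,\dots$ be i.i.d. copies of $X^{(p)}$ and $S^{(p)}_n=X^{(p)}_1+\dots+X^{(p)}_n$ (sum in the group $G_p$), $S^{(p)}_0=0$. Put $D_p=\frac{p^b(p-1)}{p^{b+1}-1}\sigma_p$. For an integer $m\ge0$, let $\mathbb{P}^{(m)}_p$ be the law on $D(\mathbb{Q}_p)$ (càdlàg paths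 $[0,\infty)\to\mathbb{Q}_p$) of $t\mapsto p^mS^{(p)}_{\lfloor D_pp^{mb}t\rfloor}$, and $\mathbb{P}^{(m)}_\sigma=\prod_{p}\mathbb{P}^{(m)}_p$ the product measure on $\prod_pD(\mathbb{Q}_p)$ (independent components). For $x=(x_p)_p\in\prod_pD(\mathbb{Q}_p)$, $T>0$, $M>0$, $\lambda>0$, define the event $\Lambda(T,M,\lambda)=\{x:\ \sup_{s\le T}|x_p(s)|_p/p<\lambda\text{ for all primes }p\ge M\}$. *)

(* Defs.v *)
From HB Require Import structures.
From mathcomp Require Import all_boot all_order all_algebra.
From mathcomp Require Import all_classical all_reals all_analysis.
Set Implicit Arguments. Unset Strict Implicit. Unset Printing Implicit Defensive.
Import Order.TTheory GRing.Theory Num.Theory.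
Local Open Scope classical_set_scope.
Local Open Scope ring_scope.

Definition padic_abs {R : realType} (p : nat) (q : rat) : R :=
  if q == 0 then 0
  else (p%:R ^+ logn p `|denq q|%N) / (p%:R ^+ logn p `|numq q|%N).

(* G_p: p-adic numbers sum_{k<0} a_k p^k (finitely many nonzero digits);
   these are exactly the rationals in [0,1) whose denominator is a power of p. *)
Definition in_Gp (p : nat) (q : rat) : Prop :=
  0 <= q /\ q < 1 /\ exists k : nat, denq q = (p ^ k)%N%:Z.

(* group law of G_p ≅ Q_p/Z_p on representatives: add, then drop the
   integer part (the integer part lies in Z ⊂ Z_p). *)
Definition Gp_add (x y : rat) : rat := (x + y) - (Num.floor (x + y))%:~R.

(* the random walk S_n = X_0 + ... + X_{n-1} in G_p (X_i here is the paper's X_{i+1}) *)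
Fixpoint walk {Omega : Type} (X : nat -> Omega -> rat) (n : nat) (w : Omega) : rat :=
  match n with
  | 0 => 0
  | n'.+1 => Gp_add (walk X n' w) (X n' w)
  end.

Definition Dp {R : realType} (b : R) (sigma : nat -> R) (p : nat) : R :=
  (p%:R `^ b) * (p%:R - 1) / (p%:R `^ (b + 1) - 1) * sigma p.

Definition scaled_path {R : realType} {Omega : Type} (b : R) (sigma : nat -> R)
    (X : nat -> nat -> Omega -> rat) (p m : nat) (t : R) (w : Omega) : rat :=
  (p ^ m)%N%:R * walk (X p) (Num.truncn (Dp b sigma p * (p%:R `^ (m%:R * b)) * t)) w.

Definition Lambda {R : realType} {Omega : Type} (b : R) (sigma : nat -> R)
    (X : nat -> nat -> Omega -> rat) (m : nat) (T M lambda : R) : set Omega :=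
  [set w | forall p : nat, prime p -> M <= p%:R ->
     sup [set padic_abs p (scaled_path b sigma X p m s w) / p%:R
          | s in [set s : R | 0 <= s <= T]] < lambda].

Definition mutually_independent {d : measure_display} {Omega : measurableType d}
    {R : realType} (P : probability Omega R) (X : nat -> nat -> Omega -> rat) : Prop :=
  forall (s : seq (nat * nat)) (A : nat * nat -> set rat),
    uniq s -> all (fun j => prime j.1) s ->
    P (\bigcap_(j in [set` s]) (X j.1 j.2 @^-1` A j)) =
    (\prod_(j <- s) P (X j.1 j.2 @^-1` A j))%E.

(* law of X^(p): G_p-valued, P(|X|_p = p^k) = (p^b - 1) p^(-k b) for k >= 1,
   and conditionally on |X|_p = p^k uniform on {x in G_p : |x|_p = p^k}. *)
Definition has_law_Xp {d : measure_display} {Omega : measurableType d}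
    {R : realType} (P : probability Omega R) (b : R) (p : nat)
    (Y : Omega -> rat) : Prop :=
  (forall w, in_Gp p (Y w)) /\
  (forall A : set rat, measurable (Y @^-1` A)) /\
  (forall k : nat, (1 <= k)%N ->
     P [set w | padic_abs (R:=R) p (Y w) = p%:R ^+ k] =
       ((p%:R `^ b - 1) * p%:R `^ (- (k%:R * b)))%:E) /\
  (forall (k : nat) (x y : rat), (1 <= k)%N ->
     in_Gp p x -> in_Gp p y ->
     padic_abs p x = p%:R ^+ k :> R -> padic_abs p y = p%:R ^+ k :> R ->
     P [set w | Y w = x] = P [set w | Y w = y]).

(* Main.v *)
Require Import Defs.
From HB Require Import structures.
From mathcomp Require Import all_boot all_order all_algebra.
From mathcomp Require Import all_classical all_reals all_analysis.
From mathcomp Require Import ring lra.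
Import Order.TTheory GRing.Theory Num.Theory.
Local Open Scope classical_set_scope.
Local Open Scope ring_scope.



Definition pint (p m : nat) (q : rat) : Prop := ((p ^ m)%N%:R * q \is a Num.int).

Lemma pint_add p m x y : pint p m x -> pint p m y -> pint p m (Gp_add x y).
Proof.
rewrite /pint /Gp_add => hx hy.
rewrite mulrBr mulrDr; apply: rpredB; first exact: rpredD.
apply: rpredM; [exact: natr_int | exact: intr_int].
Qed.

Lemma walk_pint {Omega : Type} (Y : nat -> Omega -> rat) p m w n :
  (forall i, (i < n)%N -> pint p m (Y i w)) -> pint p m (walk Y n w).
Proof.
elim: n => [|n IH] H /=; first by rewrite /pint mulr0.
apply: pint_add; first by apply: IH => i hi; apply: H; exact: ltnW.
exact: H.
Qed.

Lemma walk_dep {Omega : Type} (Y : nat -> Omega -> rat) n w w' :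
  (forall i, (i < n)%N -> Y i w = Y i w') -> walk Y n w = walk Y n w'.
Proof.
elim: n => [|n IH] H //=.
rewrite IH; last by move=> i hi; apply: H; exact: ltnW.
by rewrite H.
Qed.

Lemma padic_abs_int (R : realType) p q : prime p -> q \is a Num.int ->
  padic_abs (R:=R) p q <= 1.
Proof.
move=> pp qi; rewrite /padic_abs; case: ifP => // _.
have -> : denq q = 1.
  by move: qi; rewrite intrEfloor => /eqP <-; rewrite denq_int.
rewrite /= logn1 expr0 mul1r invf_le1.
  apply: exprn_ege1; rewrite ler1n; exact: prime_gt0.
by apply: exprn_gt0; rewrite ltr0n prime_gt0.
Qed.



Lemma small_pint (R : realType) p m k q : prime p -> in_Gp p q ->
  (1 <= k <= m)%N -> padic_abs (R:=R) p q = p%:R ^+ k -> pint p m q.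
Proof.
move=> pp [_ [_ [j hj]]] /andP[k1 km].
have p1 : (1 < p)%N by exact: prime_gt1.
rewrite /padic_abs; case: ifP => [_ /esym/eqP|q0].
  by rewrite expf_eq0 pnatr_eq0 (gtn_eqF (prime_gt0 pp)) andbF.
rewrite hj /= pfactorK // => E.
have jm : (j <= m)%N.
  case: j hj E => [|j] hj E; first by [].
  have cp : coprime p `|numq q|.
    have := coprime_num_den q; rewrite hj /= coprime_sym.
    by rewrite coprime_pexpl.
  move: E; rewrite (logn_coprime cp) expr0 divr1 => /eqP.
  rewrite -!natrX eqr_nat eqn_exp2l // => /eqP ->; exact: km.
rewrite /pint -(divq_num_den q) hj.
rewrite -(subnK jm) expnD natrM.
have -> : ((p ^ j)%N%:Z)%:Q = ((p ^ j)%N)%:R :> rat by [].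
rewrite -mulrA [X in _ * X]mulrCA mulfV ?mulr1.
  by apply: rpredM; [exact: natr_int | exact: intr_int].
by rewrite pnatr_eq0 gtn_eqF // expn_gt0 prime_gt0.
Qed.



Lemma bad_prob (R : realType) (d : measure_display) (Omega : measurableType d)
  (P : probability Omega R) (b : R) p (Y : Omega -> rat) m :
  0 < b -> prime p -> has_law_Xp P b p Y ->
  (P [set w | ~ pint p m (Y w)] <= (((p%:R `^ b) ^+ m)^-1)%:E)%E.
Proof.
move=> b0 pp [HG [HM [HP _]]].
have p0 : (0 : R) < p%:R by rewrite ltr0n prime_gt0.
set c := p%:R `^ b.
have c0 : 0 < c by exact: powR_gt0.
set A := fun k : nat => [set w | padic_abs (R:=R) p (Y w) = p%:R ^+ k].
have mA : forall k, measurable (A k) by move=> k; exact: (HM [set q | padic_abs (R:=R) p q = p%:R ^+ k]).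
have PA : forall k, (1 <= k)%N -> P (A k) = ((c - 1) * (c ^+ k)^-1)%:E.
  move=> k k1; rewrite HP //; congr ((_ * _)%:E).
  by rewrite powRN mulrC powRrM powR_mulrn ?powR_ge0.
set G := fun n : nat => [set w | exists k, (1 <= k <= n)%N /\ A k w].
have G0 : G 0%N = set0.
  by apply/seteqP; split => w //= [k [/andP[k1 k0] _]]; move: k1; rewrite leqn0 in k0; rewrite (eqP k0).
have GS : forall n, G n.+1 = G n `|` A n.+1.
  move=> n; apply/seteqP; split => w; rewrite /G /=.
    move=> [k [/andP[k1 kn] Ak]]; rewrite leq_eqVlt in kn.
    case/orP: kn => [/eqP ek|kn]; first by right; rewrite -ek.
    by left; exists k; rewrite k1.
  case=> [[k [/andP[k1 kn] Ak]]|Ak]; first by exists k; rewrite k1 ltnW.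
  by exists n.+1; rewrite leqnn.
have mG : forall n, measurable (G n).
  elim=> [|n IH]; [rewrite G0; exact: measurable0 | rewrite GS; exact: measurableU].
have PG : forall n, P (G n) = (1 - (c ^+ n)^-1)%:E.
  elim=> [|n IH]; first by rewrite G0 measure0 expr0 invr1 subrr.
  rewrite GS measureU //; last first.
    apply/seteqP; split => w //= [[k [/andP[k1 kn] Ak]] An].
  move: Ak; rewrite /A /= An => /eqP; rewrite -!natrX eqr_nat eqn_exp2l ?prime_gt1 //.
  by move=> /eqP ek; move: kn; rewrite -ek ltnn.
  transitivity ((1 - c ^- n)%:E + ((c - 1) / c ^+ n.+1)%:E)%E.
    by congr (_ + _)%E; [exact: IH | exact: PA].
  rewrite -EFinD; congr (_%:E).
  rewrite exprSr invfM; field; rewrite expf_neq0 // gt_eqF //.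
have sub : [set w | ~ pint p m (Y w)] `<=` ~` G m.
  move=> w /= nP [k [km Ak]]; apply: nP; exact: small_pint pp (HG w) km Ak.
have hC : (P (~` G m) <= (c ^- m)%:E)%E.
  rewrite probability_setC // PG -EFinB lee_fin.
  by rewrite opprB addrCA subrr addr0.
apply: le_trans hC; apply: le_measure sub.
- by rewrite inE; exact: (HM [set q | ~ pint p m q]).
- by rewrite inE; apply: measurableC.
Qed.



Lemma meas_dep (d : measure_display) (Omega : measurableType d)
  (Y : nat -> Omega -> rat)
  (HY : forall i (A : set rat), measurable (Y i @^-1` A)) N :
  forall S : set Omega,
  (forall w w', (forall i, (i < N)%N -> Y i w = Y i w') -> S w -> S w') ->
  measurable S.
Proof.
elim: N => [|N IH] S HS.
  have [[w Sw]|nS] := pselect (exists w, S w).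
    have -> : S = setT.
      by apply/seteqP; split => // w' _; apply: HS Sw.
    exact: measurableT.
  have -> : S = set0.
    by apply/seteqP; split => // w' Sw'; apply: nS; exists w'.
  exact: measurable0.
pose S' (q : rat) := [set w | exists w', [/\ S w', Y N w' = q &
   forall i, (i < N)%N -> Y i w' = Y i w]].
have -> : S = \bigcup_q (Y N @^-1` [set q] `&` S' q).
  apply/seteqP; split => w.
    move=> Sw; exists (Y N w) => //; split => //; exists w; split => //.
  case=> q _ [/= Yq [w' [Sw' Yw' Hw']]].
  apply: HS Sw' => i; rewrite ltnS leq_eqVlt => /orP[/eqP ->|hi].
    by rewrite Yw' Yq.
  exact: Hw'.
apply: bigcupT_measurable_rat => q; apply: measurableI; first exact: HY.
apply: IH => w w'' H [w' [Sw' Yw' Hw']]; exists w'; split => // i hi.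
by rewrite Hw' // H.
Qed.



Lemma Dp_bound (R : realType) (b : R) sigma p : 0 < b -> prime p -> 0 <= sigma p ->
  0 <= Dp b sigma p <= sigma p.
Proof.
move=> b0 pp s0.
have p2 : (2 : R) <= p%:R by rewrite ler_nat prime_gt1.
have c1 : 1 <= p%:R `^ b.
  have p1 : (1:R) <= p%:R by lra.
  rewrite -[X in X <= _](powRr0 (p%:R : R)); apply: (ler_powR p1); exact: ltW.
have E : p%:R `^ (b + 1) = p%:R `^ b * p%:R :> R.
  rewrite powRD ?powRr1 //; last by apply/implyP => _; rewrite pnatr_eq0 gtn_eqF // prime_gt0.
rewrite /Dp E.
have den : 0 < p%:R `^ b * p%:R - 1 :> R by nra.
apply/andP; split.
  apply: mulr_ge0 => //; apply: divr_ge0; [apply: mulr_ge0 | ]; lra.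
rewrite -[X in _ <= X]mul1r ler_wpM2r // ler_pdivrMr // mul1r; nra.
Qed.

Fixpoint unionN {T : Type} (F : nat -> set T) (n : nat) : set T :=
  match n with 0 => set0 | n'.+1 => unionN F n' `|` F n' end.

Lemma unionNP {T : Type} (F : nat -> set T) n w :
  unionN F n w <-> exists2 i, (i < n)%N & F i w.
Proof.
elim: n => [|n IH] /=; first by split => // [[]].
split.
  case=> [/IH [i hi Fi]|Fn]; first by exists i => //; exact: ltnW.
  by exists n.
move=> [i]; rewrite ltnS leq_eqVlt => /orP[/eqP ->|hi] Fi; first by right.
by left; apply/IH; exists i.
Qed.

Lemma unionN_meas (d : measure_display) (Omega : measurableType d)
  (F : nat -> set Omega) n : (forall i, measurable (F i)) -> measurable (unionN F n).
Proof.
move=> HF; elim: n => [|n IH] /=; [exact: measurable0 | exact: measurableU].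
Qed.

Lemma unionN_le (R : realType) (d : measure_display) (Omega : measurableType d)
  (P : probability Omega R) (F : nat -> set Omega) n (x : R) :
  (forall i, measurable (F i)) -> (forall i, (P (F i) <= x%:E)%E) ->
  (P (unionN F n) <= (n%:R * x)%:E)%E.
Proof.
move=> HF Hx; elim: n => [|n IH] /=; first by rewrite measure0 mul0r.
have H := measureU2 P (@unionN_meas _ _ F n HF) (HF n).
apply: le_trans H _.
rewrite -natr1 mulrDl mul1r EFinD.
apply: leeD; [exact: IH | exact: Hx].
Qed.

Lemma prime_bound (R : realType) (d : measure_display) (Omega : measurableType d)
  (P : probability Omega R) (b : R) sigma (X : nat -> nat -> Omega -> rat) p m (T : R) :
  0 < b -> prime p -> 0 <= sigma p -> 0 <= T ->
  (forall i, has_law_Xp P b p (X p i)) ->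
  (P (unionN (fun i => [set w | ~ pint p m (X p i w)])
        (Num.truncn (Dp b sigma p * (p%:R `^ (m%:R * b)) * T))) <= (T * sigma p)%:E)%E.
Proof.
move=> b0 pp s0 T0 HL.
have p0 : (0 : R) < p%:R by rewrite ltr0n prime_gt0.
set c := p%:R `^ b.
have c0 : 0 < c by exact: powR_gt0.
have cm : p%:R `^ (m%:R * b) = c ^+ m.
  by rewrite mulrC powRrM powR_mulrn // ltW.
apply: le_trans (@unionN_le R d Omega P _ _ ((c ^+ m)^-1) _ _) _.
- move=> i; have [_ [HM _]] := HL i; exact: (HM [set q | ~ pint p m q]).
- move=> i; exact: (@bad_prob R d Omega P b p (X p i) m b0 pp (HL i)).
rewrite lee_fin cm.
have /andP[D0 D1] := @Dp_bound R b sigma p b0 pp s0.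
have cm0 : 0 < c ^+ m by exact: exprn_gt0.
have Hx : 0 <= Dp b sigma p * c ^+ m * T.
  by apply: mulr_ge0 => //; apply: mulr_ge0 => //; exact: ltW.
apply: le_trans (_ : Dp b sigma p * T <= _); last first.
  by rewrite mulrC ler_wpM2l.
rewrite -ler_pdivlMr ?invr_gt0 // invrK.
by rewrite [X in _ <= X]mulrAC truncn_le.
Qed.



Lemma trunc_mono (R : realType) (b : R) sigma p m (T s : R) : 0 < b -> prime p ->
  0 <= sigma p -> 0 <= s <= T ->
  (Num.truncn (Dp b sigma p * (p%:R `^ (m%:R * b)) * s) <=
   Num.truncn (Dp b sigma p * (p%:R `^ (m%:R * b)) * T))%N.
Proof.
move=> b0 pp s0 /andP[s0' sT]; apply: le_truncn; apply: ler_wpM2l => //.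
apply: mulr_ge0; last exact: powR_ge0.
by have /andP[] := @Dp_bound R b sigma p b0 pp s0.
Qed.

Lemma Lambda_meas (R : realType) (b : R) (sigma : nat -> R)
  (d : measure_display) (Omega : measurableType d) (P : probability Omega R)
  (X : nat -> nat -> Omega -> rat) m (T M lambda : R) :
  0 < b -> (forall p, 0 <= sigma p) ->
  (forall p i, prime p -> has_law_Xp P b p (X p i)) ->
  measurable (Lambda b sigma X m T M lambda).
Proof.
move=> b0 s0 HL.
set L := fun p : nat => [set w | prime p -> M <= p%:R ->
     sup [set padic_abs p (scaled_path b sigma X p m s w) / p%:R
          | s in [set s : R | 0 <= s <= T]] < lambda].
have -> : Lambda b sigma X m T M lambda = \bigcap_p L p.
  apply/seteqP; split => w /= H p.
    by move=> _; rewrite /L /=; exact: H.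
  by have := H p I.
apply: bigcapT_measurable => p.
have [pp|np] := boolP (prime p); last first.
  have -> : L p = setT by apply/seteqP; split => // w _ /= pp; rewrite pp in np.
  exact: measurableT.
apply: (@meas_dep d Omega (X p) _
   (Num.truncn (Dp b sigma p * (p%:R `^ (m%:R * b)) * T))).
  by move=> i A; have [_ [HM _]] := HL p i pp; exact: HM.
move=> w w' H /= Hw pp' Mp.
have E : [set padic_abs (R:=R) p (scaled_path b sigma X p m s w) / p%:R
          | s in [set s : R | 0 <= s <= T]] =
   [set padic_abs (R:=R) p (scaled_path b sigma X p m s w') / p%:R
          | s in [set s : R | 0 <= s <= T]].
  apply: eq_imagel => s hs; rewrite /scaled_path (@walk_dep _ (X p) _ w w') //.
  move=> i hi; apply: H; apply: leq_trans hi _.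
  exact: trunc_mono.
by rewrite -E; exact: Hw.
Qed.



Theorem lemma3 (R : realType) (b : R) (sigma : nat -> R)
  (d : measure_display) (Omega : measurableType d) (P : probability Omega R)
  (X : nat -> nat -> Omega -> rat) :
  0 < b ->
  (forall p, 0 <= sigma p) ->
  (\sum_(0 <= n <oo | prime n) (sigma n)%:E < +oo)%E ->
  (forall p i, prime p -> has_law_Xp P b p (X p i)) ->
  mutually_independent P X ->
  forall T lambda eps : R, 0 < T -> 0 < lambda -> 0 < eps ->
  exists M : R, 0 < M /\
    ((1 - eps)%:E < limn_einf (fun m : nat => P (Lambda b sigma X m T M lambda)))%E.
Proof.
move=> b0 s0 Hsum HL _ T lambda eps T0 l0 e0.
set tailF := fun N => (\sum_(N <= n <oo | prime n) (sigma n)%:E)%E.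
have Htail : tailF N @[N --> \oo] --> 0%:E.
  by apply: nneseries_tail_cvg Hsum _ => k _; rewrite lee_fin.
set e' := eps / (2 * T).
have e'0 : 0 < e' by apply: divr_gt0 => //; lra.
have HN : \forall N \near \oo, (tailF N < e'%:E)%E.
  have [Hfin Hcv] := (fine_cvgP _ _).1 Htail.
  near=> N.
  have /fineK <- : tailF N \is a fin_num by near: N.
  rewrite lte_fin; near: N; exact: (cvgr_lt 0 Hcv).
case: HN => K0 _ HK0.
set K := maxn K0 (maxn 2 (Num.truncn lambda^-1).+1).
have K2 : (2 <= K)%N by rewrite /K !leq_max leqnn orbT.
have KT : (Num.truncn lambda^-1 < K)%N by rewrite /K !leq_max ltnSn !orbT.
have KK0 : (K0 <= K)%N by rewrite /K leq_maxl.
exists K%:R; split; first by rewrite ltr0n; apply: leq_trans K2.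
have Hm : forall m, ((1 - eps / 2)%:E <= P (Lambda b sigma X m T K%:R lambda))%E.
  move=> m.
  set bad := fun p i => [set w | ~ pint p m (X p i w)].
  set Np := fun p => Num.truncn (Dp b sigma p * (p%:R `^ (m%:R * b)) * T).
  set B := fun n => if prime n then unionN (bad n) (Np n) else set0.
  set Bad := \bigcup_(n in ~` `I_K) B n.
  have mB : forall n, measurable (B n).
    move=> n; rewrite /B; case: ifP => pn; last exact: measurable0.
    apply: unionN_meas => i; have [_ [HM _]] := HL n i pn.
    exact: (HM [set q | ~ pint n m q]).
  have mBad : measurable Bad by apply: bigcup_measurable => k _; exact: mB.
  have sub : ~` Bad `<=` Lambda b sigma X m T K%:R lambda.
    move=> w nB p pp Mp.
    have Kp : (K <= p)%N by rewrite -(ler_nat R).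
    have good : forall i, (i < Np p)%N -> pint p m (X p i w).
      move=> i hi; apply/not_notP => ni; apply: nB.
      exists p; first by rewrite /= ltnNge Kp.
      by rewrite /B pp; apply/unionNP; exists i.
    have p0 : (0 : R) < p%:R by rewrite ltr0n prime_gt0.
    have pl : p%:R^-1 < lambda.
      rewrite invf_plt ?posrE //.
      rewrite -truncn_lt_nat; last by rewrite invr_ge0 ltW.
      exact: leq_trans KT Kp.
    apply: le_lt_trans pl; apply: ge_sup.
      exists (padic_abs (R:=R) p (scaled_path b sigma X p m 0 w) / p%:R).
      by exists 0 => //=; rewrite lexx ltW.
    move=> _ [s hs <-].
    rewrite -[X in _ <= X]mul1r; apply: ler_wpM2r; first by rewrite invr_ge0 ltW.
    apply: padic_abs_int => //; apply: walk_pint => i hi; apply: good.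
    apply: leq_trans hi _; exact: trunc_mono.
  have PBad : (P Bad <= (eps / 2)%:E)%E.
    have H1 := measure_sigma_subadditive_tail P mB mBad (@subset_refl _ Bad).
    apply: le_trans H1 _.
    apply: le_trans (_ : _ <= \sum_(K <= n <oo) (if prime n then (T * sigma n)%:E else 0))%E _.
      apply: lee_nneseries => [n _ _|n _]; first exact: measure_ge0.
      rewrite /B; case: ifP => pn; last by rewrite measure0.
      apply: prime_bound => //; first exact: ltW.
      by move=> i; exact: HL.
    rewrite -eseries_mkcond.
    under eq_eseriesr do rewrite EFinM.
    rewrite nneseriesZl; last by move=> i _; rewrite lee_fin.
    apply: le_trans (_ : T%:E * e'%:E <= _)%E.
      rewrite lee_pmul2l ?lte_fin //; apply: ltW; exact: HK0.
    rewrite -EFinM lee_fin /e' le_eqVlt; apply/orP; left; apply/eqP; field; lra.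
  have hC : P (~` Bad) = (1 - P Bad)%E := probability_setC P mBad.
  have h1 : ((1 - eps / 2)%:E <= P (~` Bad))%E.
    by rewrite hC EFinB; apply: leeB.
  apply: le_trans h1 _; apply: le_measure sub; rewrite inE.
    exact: measurableC.
  exact: (@Lambda_meas R b sigma d Omega P X m T K%:R lambda b0 s0 HL).
apply: (lt_le_trans (_ : _ < (1 - eps / 2)%:E)%E); first by rewrite lte_fin; lra.
rewrite limn_einf_lim; apply: lime_ge; first exact: is_cvg_einfs.
apply: nearW => n; rewrite /einfs; apply/ereal_infP => _ [k _ <-]; exact: Hm.
Unshelve. all: by end_near.
Qed.
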